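(* Let $f_1,\dots,f_{n_f}:\mathbb{R}^{n_x}\times\mathbb{R}^{n_u}\to\mathbb{R}^{n_x}$ and $g_1,\dots,g_{n_f}:\mathbb{R}^{n_x}\to\mathbb{R}$ be smooth, let $F(x,u)=[f_1(x,u),\dots,f_{n_f}(x,u)]$ and $g(x)=(g_1(x),\dots,g_{n_f}(x))$. Let $x:[0,T]\to\mathbb{R}^{n_x}$ be a continuous function and $\theta,\lambda:[0,T]\to\mathbb{R}^{n_f}$, $\mu:[0,T]\to\mathbb{R}$ functions such that $x,\theta,\lambda,\mu$ form a solution of the dynamic complementarity system $$\dot x=F(x,u)\theta,\quad 0=g(x)-\lambda-\mu e,\quad 1=e^\top\theta,\quad 0\le\theta\perp\lambda\ge 0,$$ where the algebraic conditions hold for every $t\in[0,T]$. Then the functions $\lambda(t)$ and $\mu(t)$ are continuous in time.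
   Context: $e$ denotes the vector of all ones; $0\le a\perp b\ge 0$ means $a\ge 0$, $b\ge 0$ componentwise and $a^\top b=0$. *)

(* Defs.v *)
From HB Require Import structures.
From mathcomp Require Import all_boot all_order all_algebra.
From mathcomp Require Import all_classical all_reals all_analysis.
Set Implicit Arguments. Unset Strict Implicit. Unset Printing Implicit Defensive.
Import Order.TTheory GRing.Theory Num.Theory.
Import numFieldNormedType.Exports.
Local Open Scope classical_set_scope.
Local Open Scope ring_scope.

Fixpoint iter_dir {R : realType} {V W : normedModType R}
    (f : V -> W) (vs : seq V) : V -> W :=
  match vs with
  | [::] => f
  | v :: vs' => fun x => 'D_v (iter_dir f vs') x
  end.

Definition smooth {R : realType} {V W : normedModType R} (f : V -> W) : Prop :=
  forall (vs : seq V) (x : V), differentiable (iter_dir f vs) x.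

(* F(x,u) = [f_1(x,u), ..., f_nf(x,u)] as an nx-by-nf matrix
   (vectors of R^n are row vectors 'rV_n; column i of F is f_i). *)
Definition Fmat {R : realType} (nx nu nf : nat)
    (f : 'I_nf -> 'rV[R]_nx * 'rV[R]_nu -> 'rV[R]_nx)
    (x : 'rV[R]_nx) (u : 'rV[R]_nu) : 'M[R]_(nx, nf) :=
  \matrix_(j < nx, i < nf) f i (x, u) 0 j.

Definition gvec {R : realType} (nx nf : nat) (g : 'I_nf -> 'rV[R]_nx -> R)
    (x : 'rV[R]_nx) : 'rV[R]_nf := \row_(i < nf) g i x.

Definition ones {R : realType} (n : nat) : 'rV[R]_n := const_mx 1.

Definition compl {R : realType} (n : nat) (a b : 'rV[R]_n) : Prop :=
  (forall i, 0 <= a 0 i) /\ (forall i, 0 <= b 0 i) /\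
  \sum_(i < n) a 0 i * b 0 i = 0.

(* xdot = F(x,u) theta on [0,T] in the Caratheodory (integral) sense:
   for every t in [0,T] and every component j, s |-> (F(x s,u s) theta s)_j
   is Lebesgue integrable on [0,t] and
   x_j(t) = x_j(0) + int_0^t (F(x(s),u(s)) theta(s))_j ds. *)
Definition ode_solution {R : realType} (nx nu nf : nat)
    (f : 'I_nf -> 'rV[R]_nx * 'rV[R]_nu -> 'rV[R]_nx) (T : R)
    (x : R -> 'rV[R]_nx) (u : R -> 'rV[R]_nu) (theta : R -> 'rV[R]_nf) : Prop :=
  forall t, t \in `[0, T] -> forall j : 'I_nx,
    let h := fun s => (Fmat f (x s) (u s) *m (theta s)^T) j 0 in
    (@lebesgue_measure R).-integrable `[0, t] (fun s => (h s)%:E) /\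
    x t 0 j = x 0 0 j + \int[@lebesgue_measure R]_(s in `[0, t]) h s.

Definition DCS_solution {R : realType} (nx nu nf : nat)
    (f : 'I_nf -> 'rV[R]_nx * 'rV[R]_nu -> 'rV[R]_nx)
    (g : 'I_nf -> 'rV[R]_nx -> R) (T : R)
    (u : R -> 'rV[R]_nu) (x : R -> 'rV[R]_nx)
    (theta lam : R -> 'rV[R]_nf) (mu : R -> R) : Prop :=
  ode_solution f T x u theta /\
  forall t, t \in `[0, T] ->
    [/\ gvec g (x t) - lam t - mu t *: ones nf = 0,
        \sum_(i < nf) theta t 0 i = 1 &
        compl (theta t) (lam t)].

(* Main.v *)
Require Import Defs.
From HB Require Import structures.
From mathcomp Require Import all_boot all_order all_algebra.
From mathcomp Require Import all_classical all_reals all_analysis.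
From mathcomp Require Import lra.
Import Order.TTheory GRing.Theory Num.Theory.
Import numFieldNormedType.Exports.
Local Open Scope classical_set_scope.
Local Open Scope ring_scope.

Lemma pointwise (R : realType) (nx nf : nat) (g : 'I_nf -> 'rV[R]_nx -> R)
  (y : 'rV[R]_nx) (th la : 'rV[R]_nf) (m : R) :
  [/\ gvec g y - la - m *: ones nf = 0,
        \sum_(i < nf) th 0 i = 1 & compl th la] ->
  (forall i, la 0 i = g i y - m) /\ (forall i, m <= g i y) /\
  exists j, m = g j y.
Proof.
move=> [E S [th0 [la0 C]]].
have Hla : forall i, la 0 i = g i y - m.
  move=> i; have := congr1 (fun M : 'rV[R]_nf => M 0 i) E.
  rewrite !mxE /= mulr1 => /eqP; rewrite subr_eq0 => /eqP <-.
  by rewrite opprB addrCA subrr addr0.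
split=> //; split.
  by move=> i; have := la0 i; rewrite Hla subr_ge0.
have [j thj] : exists j, th 0 j != 0.
  apply/not_existsP => H.
  have S0 : \sum_(i < nf) th 0 i = 0.
    by apply: big1 => i _; have := H i; case: eqP.
  by move: S; rewrite S0 => /eqP; rewrite eq_sym oner_eq0.
exists j.
have P0 := psumr_eq0P (fun i _ => mulr_ge0 (th0 i) (la0 i)) C (i:=j) isT.
move/eqP: P0; rewrite mulf_eq0 (negbTE thj) /= Hla subr_eq0 => /eqP ->.
by [].
Qed.
Arguments pointwise {R nx nf g y th la m}.

Theorem lemma1 (R : realType) (nx nu nf : nat)
    (f : 'I_nf -> 'rV[R]_nx * 'rV[R]_nu -> 'rV[R]_nx)
    (g : 'I_nf -> 'rV[R]_nx -> R) (T : R)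
    (u : R -> 'rV[R]_nu) (x : R -> 'rV[R]_nx)
    (theta lam : R -> 'rV[R]_nf) (mu : R -> R) :
  (forall i, smooth (f i)) ->
  (forall i, smooth (g i)) ->
  {within `[0, T], continuous x} ->
  DCS_solution f g T u x theta lam mu ->
  {within `[0, T], continuous lam} /\ {within `[0, T], continuous mu}.
Proof.
move=> _ gs xc [_ alg].
set A := `[0, T] in xc *.
have gc : forall i, continuous (g i).
  by move=> i y; apply: differentiable_continuous; exact: (gs i [::] y).
have PW := fun t (At : t \in A) => pointwise (alg t At).
have gxc : forall i, {within [set` A], continuous (fun s => g i (x s))}.
  by move=> i s; apply: continuous_comp (xc s) (gc i _).
have muc : {within [set` A], continuous mu}.
  apply/subspace_continuousP => t At.
  have gt := fun i => (subspace_continuousP _ _).1 (gxc i) t At.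
  apply/cvgrPdist_lt => e e0.
  have [_ [Hle [j Hj]]] := PW t At.
  have H1 : \forall s \near within [set` A] (nbhs t),
      forall i, `|g i (x t) - g i (x s)| < e.
    by apply: filter_forall => i; exact: (cvgrPdist_lt _ _).1 (gt i) e e0.
  near=> s.
  have As : s \in A by near: s; exact: near_withinT.
  have [_ [Hle' [k Hk]]] := PW s As.
  have Hi : forall i, `|g i (x t) - g i (x s)| < e by near: s.
  have := Hi j; have := Hi k; have := Hle k; have := Hle' j.
  rewrite /from_subspace Hj Hk !ltr_norml.
  move=> a b /andP[c d] /andP[d' e'].
  apply/andP; split; lra.
  Unshelve. all: try by end_near.
split=> //.
apply/subspace_continuousP => t At.
have gt := fun i => (subspace_continuousP _ _).1 (gxc i) t At.
have mt := (subspace_continuousP _ _).1 muc t At.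
apply/cvgrPdist_lt => e e0.
have e20 : 0 < e / 2 by rewrite divr_gt0.
have [Ht _] := PW t At.
have H1 : \forall s \near within [set` A] (nbhs t),
    forall i, `|g i (x t) - g i (x s)| < e / 2.
  by apply: filter_forall => i; exact: (cvgrPdist_lt _ _).1 (gt i) _ e20.
have H2 := (cvgrPdist_lt _ _).1 mt _ e20.
near=> s.
have As : s \in A by near: s; exact: near_withinT.
have [Hs _] := PW s As.
have Hi : forall i, `|g i (x t) - g i (x s)| < e / 2 by near: s.
have Hm : `|mu t - mu s| < e / 2 by near: s; exact: H2.
rewrite /from_subspace.
have -> : forall M : 'rV[R]_nf, `|M| = mx_norm M by [].
rewrite mx_normrE; apply: bigmax_lt => // -[i0 i] _ /=.
rewrite (ord1 i0) !mxE Ht Hs.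
have := Hi i; move: Hm; rewrite !ltr_norml => /andP[a b] /andP[c d].
apply/andP; split; lra.
Unshelve. all: by end_near.
Qed.
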